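(* Let $G=(V,E)$ be a graph with $\mathrm{nd}(G)=\nu$, and let $\alpha_1,\dots,\alpha_\ell$ be local linear cardinality constraints. Then there exist a neighbourhood decomposition $\mathcal{T}$ of $G$ with $|\mathcal{T}|\le\nu 4^\ell$ and local linear cardinality constraints $\alpha'_1,\dots,\alpha'_\ell$ such that: - each $\alpha'_i$ is uniform with respect to $\mathcal{T}$ (every type of $\mathcal{T}$ is uniform with respect to every $\alpha'_i$); - for every tuple $(X_1,\dots,X_\ell)$ of subsets of $V$: $X_i$ satisfies $\alpha_i$ for all $i\in[\ell]$ if and only if $X_i$ satisfies $\alpha'_i$ for all $i\in[\ell]$.
   Context: Neighbourhood decompositions: - Two vertices $u,v$ have the same neighbourhood type if $N(u)\setminus\{v\}=N(v)\setminus\{u\}$. - A neighbourhood decomposition is a partition of $V$ into classes (''types'') of pairwise same-type vertices. - $\mathrm{nd}(G)$ is the minimum size of a neighbourhood decomposition. Local linear cardinality constraints: - A local linear cardinality constraint is a map $\alpha$ assigning to each $v\in V$ an integer interval $\alpha(v)=\{l_v,\dots,u_v\}\subseteq\{0,\dots,|V|\}$, possibly empty. - $X\subseteq V$ satisfies $\alpha$ if $|X\cap N(v)|\in\alpha(v)$ for all $v$. - A type $T$ is uniform with respect to $\alpha$ if $\alpha$ is constant on $T$. *)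

(* Defs.v *)
From mathcomp Require Import all_boot.
Set Implicit Arguments. Unset Strict Implicit. Unset Printing Implicit Defensive.

Definition nbhd (T : finType) (e : rel T) (v : T) : {set T} := [set u | e v u].

Definition same_type (T : finType) (e : rel T) (u v : T) : bool :=
  (nbhd e u :\ v) == (nbhd e v :\ u).

Definition is_nd (T : finType) (e : rel T) (P : {set {set T}}) : bool :=
  partition P [set: T] &&
  [forall B in P, forall u in B, forall v in B, same_type e u v].

(* nd(G): minimum size of a neighbourhood decomposition (the singleton
   partition always is one, of size <= #|T|). *)
Definition nd (T : finType) (e : rel T) : nat :=
  \big[minn/#|T|]_(P : {set {set T}} | is_nd e P) #|P|.

(* A local linear cardinality constraint assigns to each vertex a subset of
   {0,...,|V|} (encoded as 'I_(#|T|.+1)) which is an integer interval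
   (possibly empty). *)
Definition lcc_val (T : finType) := T -> {set 'I_(#|T|.+1)}.

Definition is_interval (n : nat) (A : {set 'I_n}) : Prop :=
  exists l u : nat, A = [set i : 'I_n | l <= i <= u].

Definition is_lcc (T : finType) (alpha : lcc_val T) : Prop :=
  forall v, is_interval (alpha v).

Definition satisfies (T : finType) (e : rel T) (alpha : lcc_val T) (X : {set T}) : bool :=
  [forall v, [exists i in alpha v, val i == #|X :&: nbhd e v|]].

Definition uniform (T : finType) (alpha : lcc_val T) (B : {set T}) : bool :=
  [forall u in B, forall v in B, alpha u == alpha v].

(* Main.v *)
Require Import Defs.
From mathcomp Require Import all_boot zify.
Set Implicit Arguments. Unset Strict Implicit. Unset Printing Implicit Defensive.

Lemma st_le (T : finType) (e : rel T) (X : {set T}) v w :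
  same_type e v w -> #|X :&: nbhd e v| <= #|X :&: nbhd e w| + 1.
Proof.
move=> /eqP H.
rewrite (cardsD1 w (X :&: nbhd e v)).
have : #|(X :&: nbhd e v) :\ w| <= #|X :&: nbhd e w|.
  apply: subset_leq_card; apply/subsetP => x.
  have Hx : (x \in nbhd e v :\ w) = (x \in nbhd e w :\ v) by rewrite H.
  rewrite !inE in Hx *.
  case/andP => xw /andP [xX xv]; rewrite xX /=.
  by move: Hx; rewrite xw xv /= => /esym /andP [].
by case: (w \in _) => /=; lia.
Qed.

Lemma sat_int (T : finType) (e : rel T) (a b : T -> nat) (X : {set T}) :
  satisfies e (fun v => [set k : 'I_(#|T|.+1) | a v <= k <= b v]) X =
  [forall v, a v <= #|X :&: nbhd e v| <= b v].
Proof.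
apply/forallP/forallP => H v.
  by have /existsP [k /andP [] ] := H v; rewrite inE => Hk /eqP <-.
apply/existsP.
have Hs : #|X :&: nbhd e v| < #|T|.+1 by rewrite ltnS max_card.
by exists (Ordinal Hs); rewrite inE /= H eqxx.
Qed.

Section Core.
End Core.

Definition wL (T : finType) (P : {set {set T}}) (lb : T -> nat) (v : T) :=
  arg_max v (fun w => w \in pblock P v) lb.
Definition wU (T : finType) (P : {set {set T}}) (ub : T -> nat) (v : T) :=
  arg_min v (fun w => w \in pblock P v) ub.

Lemma wLP (T : finType) (P : {set {set T}}) lb v : partition P [set: T] ->
  wL P lb v \in pblock P v /\ forall w, w \in pblock P v -> lb w <= lb (wL P lb v).
Proof.
move=> /and3P [/eqP Hc _ _].
have Hv : v \in pblock P v by rewrite mem_pblock Hc inE.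
rewrite /wL; case: arg_maxnP => // w Hw Hm; split => //.
Qed.

Lemma wUP (T : finType) (P : {set {set T}}) ub v : partition P [set: T] ->
  wU P ub v \in pblock P v /\ forall w, w \in pblock P v -> ub (wU P ub v) <= ub w.
Proof.
move=> /and3P [/eqP Hc _ _].
have Hv : v \in pblock P v by rewrite mem_pblock Hc inE.
rewrite /wU; case: arg_minnP => // w Hw Hm; split => //.
Qed.

Lemma nd_st (T : finType) (e : rel T) (P : {set {set T}}) x u v : is_nd e P ->
  u \in pblock P x -> v \in pblock P x -> same_type e u v.
Proof.
case/andP => Hp /forallP H Hu Hv.
have Hc : x \in cover P by case/and3P: Hp => /eqP -> _ _; rewrite inE.
have := H (pblock P x); rewrite pblock_mem //= => /forallP /(_ u).
by rewrite Hu /= => /forallP /(_ v); rewrite Hv.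
Qed.

Lemma core (T : finType) (e : rel T) (P : {set {set T}}) (lb ub : T -> nat)
  (X : {set T}) : is_nd e P ->
  [forall v, lb v <= #|X :&: nbhd e v| <= ub v] =
  [forall v, lb (wL P lb v) - (lb v < lb (wL P lb v)) <= #|X :&: nbhd e v|
               <= ub (wU P ub v) + (ub (wU P ub v) < ub v)].
Proof.
move=> HP; have Hp : partition P [set: T] by case/andP: HP.
apply/forallP/forallP => H v.
- have [Hw1 Hw2] := wLP lb v Hp.
  have [Hu1 Hu2] := wUP ub v Hp.
  have Hv : v \in pblock P v by rewrite mem_pblock; case/and3P: Hp => /eqP -> _ _; rewrite inE.
  have := Hw2 v Hv; have := Hu2 v Hv.
  have := st_le X (nd_st HP Hw1 Hv).
  have := st_le X (nd_st HP Hv Hu1).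
  have := H v; have := H (wL P lb v); have := H (wU P ub v).
  set a := #|X :&: nbhd e v|; set b := #|X :&: nbhd e (wL P lb v)|;
  set c := #|X :&: nbhd e (wU P ub v)|.
  case: ltnP; case: ltnP => /=; lia.
- have [Hw1 Hw2] := wLP lb v Hp.
  have [Hu1 Hu2] := wUP ub v Hp.
  have Hv : v \in pblock P v by rewrite mem_pblock; case/and3P: Hp => /eqP -> _ _; rewrite inE.
  have := Hw2 v Hv; have := Hu2 v Hv.
  have := H v; case: ltnP; case: ltnP => /=; lia.
Qed.

Lemma blk (T : finType) (P : {set {set T}}) (lb ub : T -> nat) v w :
  partition P [set: T] -> pblock P v = pblock P w ->
  lb (wL P lb v) = lb (wL P lb w) /\ ub (wU P ub v) = ub (wU P ub w).
Proof.
move=> Hp E.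
have [A1 A2] := wLP lb v Hp; have [B1 B2] := wLP lb w Hp.
have [C1 C2] := wUP ub v Hp; have [D1 D2] := wUP ub w Hp.
rewrite E in A1 C1 A2 C2; split; apply/eqP; rewrite eqn_leq.
- by rewrite A2 ?B2.
- by rewrite D2 ?C2.
Qed.

Lemma opt (T : finType) (e : rel T) : exists P, is_nd e P /\ #|P| <= nd e.
Proof.
rewrite /nd; apply: (big_ind (fun x => exists P, is_nd e P /\ #|P| <= x)).
- exists (preim_partition id [set: T]); split.
    rewrite /is_nd preim_partitionP /=.
    apply/forallP => B; apply/implyP => /imsetP [x _ ->].
    apply/forallP => u; apply/implyP; rewrite inE => /andP [_ /eqP <-].
    apply/forallP => v; apply/implyP; rewrite inE => /andP [_ /eqP <-].
    by rewrite /same_type.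
  by rewrite -[X in _ <= X]cardsT leq_imset_card.
- move=> x y [P [H1 H2]] [Q [H3 H4]].
  case: (leqP x y) => Hxy.
    by exists P; split => //; rewrite (minn_idPl Hxy).
  by exists Q; split => //; rewrite (minn_idPr (ltnW Hxy)).
- by move=> P HP; exists P.
Qed.

Theorem mainTheorem11 (T : finType) (e : rel T)
    (e_sym : symmetric e) (e_irr : irreflexive e)
    (nu : nat) (Hnu : nd e = nu)
    (l : nat) (alpha : 'I_l -> lcc_val T)
    (Halpha : forall i, is_lcc (alpha i)) :
  exists (P : {set {set T}}) (alpha' : 'I_l -> lcc_val T),
    [/\ is_nd e P,
        #|P| <= nu * 4 ^ l,
        (forall i, is_lcc (alpha' i)),
        (forall i, forall B, B \in P -> uniform (alpha' i) B) &
        (forall X : 'I_l -> {set T},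
           (forall i, satisfies e (alpha i) (X i)) <->
           (forall i, satisfies e (alpha' i) (X i)))].
Proof.
have hb : forall i v, {p : nat * nat |
    alpha i v == [set k : 'I_#|T|.+1 | p.1 <= k <= p.2]}.
  move=> i v; apply: sigW; case: (Halpha i v) => a [b ->]; by exists (a, b).
pose lb i v := (sval (hb i v)).1.
pose ub i v := (sval (hb i v)).2.
have Hsat : forall i X, satisfies e (alpha i) X =
    [forall v, lb i v <= #|X :&: nbhd e v| <= ub i v].
  move=> i X; rewrite -sat_int /satisfies; apply: eq_forallb => v.
  by rewrite (eqP (svalP (hb i v))).
have [P [HP HPc]] := opt e.
have Hp : partition P [set: T] by case/andP: HP.
pose L i v := lb i (wL P (lb i) v).
pose U i v := ub i (wU P (ub i) v).
pose alpha' i (v : T) := [set k : 'I_#|T|.+1 |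
   L i v - (lb i v < L i v) <= k <= U i v + (U i v < ub i v)].
pose code v : {ffun 'I_l -> bool * bool} := [ffun i => (lb i v < L i v, U i v < ub i v)].
pose g v := (pblock P v, code v).
have Hmem : forall v, v \in pblock P v.
  by move=> v; rewrite mem_pblock; case/and3P: Hp => /eqP -> _ _; rewrite inE.
have Hg : forall B u v, B \in preim_partition g [set: T] -> u \in B -> v \in B ->
    g u = g v.
  move=> B u v /imsetP [x _ ->]; rewrite !inE => /andP [_ /eqP <-] /andP [_ /eqP <-].
  by [].
exists (preim_partition g [set: T]), alpha'; split.
- rewrite /is_nd preim_partitionP /=.
  apply/forallP => B; apply/implyP => HB.
  apply/forallP => u; apply/implyP => Hu.
  apply/forallP => v; apply/implyP => Hv.
  have E : pblock P u = pblock P v := congr1 fst (Hg B u v HB Hu Hv).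
  apply: (nd_st (x := u) HP (Hmem u)); by rewrite E Hmem.
- pose f (p : {set T} * {ffun 'I_l -> bool * bool}) := [set y in [set: T] | p == g y].
  have -> : preim_partition g [set: T] = (f \o g) @: [set: T] by [].
  rewrite imset_comp.
  apply: (leq_trans (leq_imset_card f _)).
  apply: (@leq_trans #|setX P [set: {ffun 'I_l -> bool * bool}]|).
    apply: subset_leq_card; apply/subsetP => p /imsetP [v _ ->].
    by rewrite inE /= inE andbT pblock_mem //; case/and3P: Hp => /eqP -> _ _; rewrite inE.
  rewrite cardsX cardsT card_ffun card_prod card_bool card_ord -Hnu.
  by rewrite leq_mul2r HPc orbT.
- by move=> i v; eexists; eexists.
- move=> i B HB; apply/forallP => u; apply/implyP => Hu.
  apply/forallP => v; apply/implyP => Hv.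
  have E1 : pblock P u = pblock P v := congr1 fst (Hg B u v HB Hu Hv).
  have E2 : code u = code v := congr1 snd (Hg B u v HB Hu Hv).
  have [B1 B2] := blk (lb i) (ub i) Hp E1.
  have := congr1 (fun f : {ffun 'I_l -> bool * bool} => f i) E2; rewrite /= !ffunE => -[C1 C2].
  rewrite /alpha' /L /U B1 B2.
  by rewrite /L /U B1 B2 in C1 C2; rewrite C1 C2.
- have Heq : forall i X, satisfies e (alpha i) X = satisfies e (alpha' i) X.
    by move=> i X; rewrite Hsat (core _ _ _ HP) -sat_int.
  by move=> X; split => H i; [rewrite -Heq | rewrite Heq].
Qed.
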